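(* Let $\mathbb{S}$ be a metric space with its Borel $\sigma$-field, let $\{\mu_n\}_{n=1,2,\ldots}$ be a sequence of measures on $\mathbb{S}$ converging weakly to a finite measure $\mu$ on $\mathbb{S}$, and let $\{f_n\}_{n=1,2,\ldots}$ be a sequence of measurable $[-\infty,+\infty]$-valued functions on $\mathbb{S}$ such that $\{f_n^-\}_{n=1,2,\ldots}$ is asymptotically uniformly integrable with respect to $\{\mu_n\}_{n=1,2,\ldots}$. Then $$\int_{\mathbb{S}}\liminf_{n\to\infty,\,s'\to s} f_n(s')\,\mu(ds)\le\liminf_{n\to\infty}\int_{\mathbb{S}} f_n(s)\,\mu_n(ds).$$
   Context: $\mu_n$ converges weakly to $\mu$ means $\int f\,d\mu_n\to\int f\,d\mu$ for every bounded continuous $f:\mathbb{S}\to\mathbb{R}$. $f^-=-\min\{f,0\}$, $f^+=\max\{f,0\}$. For an extended-real function $f$ and measure $\nu$, $\int f\,d\nu:=\int f^+d\nu-\int f^-d\nu$, defined when $\min\{\int f^+d\nu,\int f^-d\nu\}<\infty$; all integrals appearing in the hypotheses and conclusion are assumed to be defined. $\liminf_{n\to\infty,s'\to s}f_n(s'):=\sup_{n\ge1,\delta>0}\inf_{m\ge n,\,s'\in B_\delta(s)}f_m(s')$, where $B_\delta(s)$ is the open ball of radius $\delta$ about $s$. A sequence $\{h_n\}$ is asymptotically uniformly integrable with respect to $\{\mu_n\}$ if $\lim_{K\to+\infty}\limsup_{n\to\infty}\int|h_n|\,\mathbf{1}\{|h_n|\ge K\}\,d\mu_n=0$. *)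

(* Defs.v *)
From HB Require Import structures.
From mathcomp Require Import all_boot all_order all_algebra.
From mathcomp Require Import all_classical all_reals all_analysis measurable_realfun.

Set Implicit Arguments.
Unset Strict Implicit.
Unset Printing Implicit Defensive.

Import Order.TTheory GRing.Theory Num.Theory.
Import numFieldNormedType.Exports.

Local Open Scope classical_set_scope.
Local Open Scope ring_scope.

(* A (nonempty) metric space: mathcomp-analysis metric structure (distance
   mdist, with ball x d = [set y | mdist x y < d]) together with a point
   (measurable types in mathcomp-analysis are required to be pointed). *)
#[short(type="pmetricType")]
HB.structure Definition PointedMetric (K : numDomainType) :=
  { M of Metric K M & isPointed M }.

Notation borel S := (g_sigma_algebraType (@open S)).

Section defs.
Context {R : realType} (S : pmetricType R).
Local Notation T := (borel S).

Definition weak_cvg (mu_ : nat -> {measure set T -> \bar R})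
    (mu : {measure set T -> \bar R}) : Prop :=
  forall f : S -> R, continuous f -> (exists M : R, forall x, `|f x| <= M) ->
    ((\int[mu_ n]_x (f x)%:E)%E) @[n --> \oo] --> (\int[mu]_x (f x)%:E)%E.

Definition asymp_unif_integrable (mu_ : nat -> {measure set T -> \bar R})
    (h : nat -> T -> \bar R) : Prop :=
  (limn_esup (fun n => \int[mu_ n]_(x in [set x | (K%:E <= `|h n x|)%E])
                          `|h n x|)%E) @[K --> +oo%R] --> 0%E.

Definition liminf_joint (f : nat -> T -> \bar R) (s : S) : \bar R :=
  ereal_sup [set y | exists n : nat, exists2 d : R, 0 < d &
    y = ereal_inf [set z | exists2 m : nat, (n <= m)%N &
                             exists2 s' : S, ball s d s' & z = f m s']].

End defs.

(* Main.v *)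
Require Import Defs.
From HB Require Import structures.
From mathcomp Require Import all_boot all_order all_algebra.
From mathcomp Require Import all_classical all_reals all_analysis measurable_realfun.

Import Order.TTheory GRing.Theory Num.Theory.
Local Open Scope classical_set_scope.
Local Open Scope ring_scope.
Local Open Scope ereal_scope.
From mathcomp Require Import lra zify.
Import numFieldNormedType.Exports.

Lemma maxe_fin (R : realType) (r s : R) : maxe r%:E s%:E = (Num.max r s)%:E.
Proof. by rewrite /Order.max /= lte_fin; case: ifP. Qed.
Lemma mine_fin (R : realType) (r s : R) : mine r%:E s%:E = (Num.min r s)%:E.
Proof. by rewrite /Order.min /= lte_fin; case: ifP. Qed.

Lemma ptwise1 (R : realType) (hx gx : \bar R) (c : R) :
  0 <= gx -> hx <= gx - c%:E -> maxe hx 0 + c%:E <= gx + maxe (- hx) 0.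
Proof.
case: hx => [r| |]; case: gx => [s| |] //=; rewrite ?maxe_fin ?lee_fin ?leey ?leNye //=.
- move=> s0 rs; rewrite /Num.max; case: ifP; case: ifP => /=; move=> *; lra.
- by move=> *; rewrite ?maxye ?maxNye ?maxe_fin /= ?leey.
Qed.
Lemma arith1 (R : realType) (A B G : \bar R) (C : R) :
  0 <= A -> 0 <= B -> 0 <= G ->
  A + C%:E <= G + B -> (A < +oo \/ B < +oo) -> A - B <= G - C%:E.
Proof.
case: A => [a| |]; case: B => [b| |]; case: G => [g| |] //=;
  rewrite ?lee_fin ?lte_fin ?leey ?leNye //=.
move=> *; lra.
Qed.

Lemma int_bound (R : realType) (d : measure_display) (T : measurableType d)
  (nu : {measure set T -> \bar R}) (h g : T -> \bar R) (c : R) :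
  (0 <= c)%R -> nu setT \is a fin_num ->
  measurable_fun setT h -> measurable_fun setT g -> (forall x, 0 <= g x) ->
  (forall x, h x <= g x - c%:E) ->
  (\int[nu]_x h^\+ x < +oo \/ \int[nu]_x h^\- x < +oo) ->
  \int[nu]_x h x <= \int[nu]_x g x - (c%:E * nu setT).
Proof.
move=> c0 nuf mh mg g0 hg hdef.
have nuE : c%:E * nu setT = (c * fine (nu setT))%:E by rewrite -(fineK nuf).
have key : \int[nu]_x (h^\+ x + cst c%:E x) <= \int[nu]_x (g x + h^\- x).
  apply: ge0_le_integral => //.
  - by move=> x _; apply: adde_ge0 => //=; rewrite lee_fin.
  - apply: emeasurable_funD; first exact: measurable_funepos.
    exact: measurable_cst.
  - apply: emeasurable_funD => //; exact: measurable_funeneg.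
  - by move=> x _; rewrite funeposE funenegE /=; apply: ptwise1.
rewrite ge0_integralD // in key; last exact: (measurable_funeneg mh).
rewrite [X in X <= _]ge0_integralD // in key; last exact: (measurable_funepos mh).
rewrite integral_cst // nuE in key.
rewrite integralE nuE; apply: arith1 => //.
- exact: integral_ge0.
- exact: integral_ge0.
- exact: integral_ge0.
Qed.
Lemma ptwise2 (R : realType) (fx : \bar R) (p K : R) :
  (0 <= K)%R -> (0 <= p)%R -> p%:E <= maxe fx (- K%:E) + K%:E ->
  p%:E + maxe (- fx) 0 <= maxe fx 0 + K%:E +
    (if K%:E <= maxe (- fx) 0 then maxe (- fx) 0 else 0).
Proof.
move=> K0 p0; case: fx => [r| |] /=; rewrite ?maxe_fin.
- rewrite lee_fin => H; case: ifP; rewrite lee_fin => hK;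
    rewrite /= ?addr0 -?EFinD lee_fin; move: H hK;
    rewrite /Num.max; repeat case: ifP => /= ?; move=> *; lra.
- by move=> _; rewrite !(maxye, maxNye); case: ifP => _; rewrite /= ?leey.
- by move=> _; rewrite !(maxye, maxNye) leey /= ?leey.
Qed.
Lemma arith2 (R : realType) (P A B : \bar R) (C e : R) :
  P \is a fin_num -> 0 <= A -> 0 <= B ->
  P + B <= A + C%:E + e%:E -> (A < +oo \/ B < +oo) -> P - C%:E - e%:E <= A - B.
Proof.
case: P => [p| |] //; case: A => [a| |]; case: B => [b| |] //=;
  rewrite ?lee_fin ?lte_fin ?leey ?leNye //=.
- move=> *; lra.
- by move=> _ _ _ _ [].
Qed.

Lemma key_one (R : realType) (d : measure_display) (T : measurableType d)
  (nu : {measure set T -> \bar R}) (f : T -> \bar R) (psi : T -> R) (K : R) :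
  (0 <= K)%R -> nu setT \is a fin_num -> measurable_fun setT f ->
  measurable_fun setT (fun x => (psi x)%:E) -> (forall x, 0 <= psi x)%R ->
  (forall x, (psi x)%:E <= maxe (f x) (- K%:E) + K%:E) ->
  \int[nu]_x (psi x)%:E \is a fin_num ->
  \int[nu]_(x in [set x | K%:E <= `|f^\- x|]) `|f^\- x| \is a fin_num ->
  (\int[nu]_x f^\+ x < +oo \/ \int[nu]_x f^\- x < +oo) ->
  \int[nu]_x (psi x)%:E - K%:E * nu setT
    - \int[nu]_(x in [set x | K%:E <= `|f^\- x|]) `|f^\- x| <= \int[nu]_x f x.
Proof.
move=> K0 nuf mf mpsi psi0 psif psifin efin fdef.
set D := [set x | K%:E <= `|f^\- x|].
set e := \int[nu]_(x in D) `|f^\- x|.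
have mabs : measurable_fun setT (fun x => `|f^\- x|).
  apply: (@measurableT_comp _ _ _ _ _ _ abse); first exact: abse_measurable.
  exact: measurable_funeneg.
have mD : measurable D.
  rewrite /D -[X in measurable X]setTI.
  exact: (@measurable_lee _ _ _ _ _ (cst K%:E)).
have mpatch : measurable_fun setT ((fun x => `|f^\- x|) \_ D).
  apply/(measurable_restrictT _ mD).
  exact: measurable_funS mabs.
have ptw : forall x, (psi x)%:E + f^\- x <=
    f^\+ x + cst K%:E x + ((fun x => `|f^\- x|) \_ D) x.
  move=> x; rewrite patchE /= funeposE funenegE gee0_abs; last first.
    by rewrite le_max lexx orbT.
  have -> : (x \in D) = (K%:E <= maxe (- f x) 0).
    by apply/idP/idP => [/set_mem|?]; [rewrite /D /= funenegE gee0_abs// le_max lexx orbT|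
       apply/mem_set; rewrite /D /= funenegE gee0_abs// le_max lexx orbT].
  exact: ptwise2.
have mfp := measurable_funepos mf.
have mfn := measurable_funeneg mf.
have key : \int[nu]_x ((psi x)%:E + f^\- x) <=
    \int[nu]_x (f^\+ x + cst K%:E x + ((fun x => `|f^\- x|) \_ D) x).
  apply: ge0_le_integral => //; try (by move=> x _; exact: ptw);
    try (by move=> x _; apply: adde_ge0 => //; rewrite lee_fin);
    repeat apply: emeasurable_funD => //.
have sg : forall x, True -> 0 <= ((fun x => `|f^\- x|) \_ D) x.
  by move=> x _; rewrite patchE; case: ifP => // _; exact: abse_ge0.
rewrite ge0_integralD //in key; try (by move=> x _; rewrite lee_fin).
rewrite ge0_integralD //in key; try (by move=> x _; apply: adde_ge0 => //; rewrite /= lee_fin);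
  try (by apply: emeasurable_funD => //; exact: measurable_cst).
rewrite ge0_integralD //in key; try (by move=> x _; rewrite /= lee_fin).
rewrite integral_cst // -integral_mkcond -/e in key.
rewrite [X in _ <= X]integralE.
have nuE : K%:E * nu setT = (K * fine (nu setT))%:E by rewrite -(fineK nuf).
have efin' : e \is a fin_num := efin.
rewrite nuE in key *; rewrite -(fineK efin') in key *.
apply: arith2 => //; exact: integral_ge0.
Qed.
Lemma liminf_ge (R : realType) (u : (\bar R)^nat) (c : \bar R) (N : nat) :
  (forall k, (N <= k)%N -> c <= u k) -> c <= limn_einf u.
Proof.
move=> H; rewrite limn_einf_lim.
rewrite (cvg_lim _ (@cvg_einfs_sup _ u)) //.
apply: (@le_trans _ _ (einfs u N)).
  apply: le_ereal_inf_tmp => _ [k /= Nk <-]; exact: H.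
by apply: ereal_sup_ubound; exists N.
Qed.

Lemma limsup_lt (R : realType) (u : (\bar R)^nat) (c : \bar R) :
  limn_esup u < c -> exists N, forall k, (N <= k)%N -> u k < c.
Proof.
rewrite limn_esup_lim (cvg_lim _ (@cvg_esups_inf _ u)) //.
move=> /ereal_inf_lt [_ [N _ <-] HN]; exists N => k Nk.
apply: le_lt_trans HN; apply: ereal_sup_ubound; by exists k.
Qed.

Lemma open_sup_measurable (R : realType) (S : pmetricType R) (g : borel S -> \bar R) :
  (forall a : R, open [set x : S | a%:E < g x]) -> measurable_fun setT g.
Proof.
move=> og; apply: (measurability _ (ErealGenOInfty.measurableE R)).
move=> /= _ [_ [a ->]] <-; apply: measurableI => //.
apply: sub_sigma_algebra.
rewrite preimage_itvoy; exact: og.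
Qed.

Definition Hn {R : realType} {S : pmetricType R} (F : nat -> S -> \bar R) (N : nat) (s : S) : \bar R :=
  ereal_inf [set z | exists2 m, (N <= m)%N & exists2 t, ball s (N.+1%:R^-1) t & z = F m t].
Definition aj {R : realType} {S : pmetricType R} (F : nat -> S -> \bar R) (j : nat) (t : S) : R :=
  fine (mine (Hn F j t) j%:R%:E).
Definition Ij {R : realType} {S : pmetricType R} (F : nat -> S -> \bar R) (j : nat) (s : S) : \bar R :=
  ereal_inf [set z | exists t, z = (aj F j t + j%:R * mdist s t)%:E].
Definition psij {R : realType} {S : pmetricType R} (F : nat -> S -> \bar R) (j : nat) (s : S) : R :=
  fine (Ij F j s).

Lemma Hn_ge0 {R : realType} {S : pmetricType R} (F : nat -> S -> \bar R) N s :
  (forall m x, 0 <= F m x) -> 0 <= Hn F N s.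
Proof. by move=> F0; apply: le_ereal_inf_tmp => _ [m _ [t _ ->]]. Qed.

Lemma aj_bounds {R : realType} {S : pmetricType R} (F : nat -> S -> \bar R) j t :
  (forall m x, 0 <= F m x) ->
  (0 <= aj F j t <= j%:R)%R /\ (aj F j t)%:E = mine (Hn F j t) j%:R%:E.
Proof.
move=> F0; have H0 := @Hn_ge0 _ _ F j t F0; rewrite /aj.
have fin : mine (Hn F j t) j%:R%:E \is a fin_num.
  move: H0; case: (Hn F j t) => [r| |] //= r0.
  - by rewrite mine_fin.
rewrite fineK //; split => //.
rewrite -lee_fin -[X in _ && X]lee_fin fineK // le_min H0 /= ?lee_fin //.
by rewrite ge_min lexx orbT andbT.
Qed.

Lemma open_crit {R : realType} {S : pmetricType R} (A : set S) :
  (forall x, A x -> exists2 e : R, (0 < e)%R & forall y, (mdist x y < e)%R -> A y) -> open A.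
Proof.
move=> H; rewrite openE => x Ax; rewrite /interior; apply/nbhs_ballP.
have [e e0 He] := H x Ax; exists e => // y; rewrite ballEmdist; exact: He.
Qed.

Lemma Ij_bounds {R : realType} {S : pmetricType R} (F : nat -> S -> \bar R) j s :
  (forall m x, 0 <= F m x) ->
  Ij F j s \is a fin_num /\ (0 <= psij F j s <= aj F j s)%R.
Proof.
move=> F0.
have I0 : 0 <= Ij F j s.
  apply: le_ereal_inf_tmp => _ [t ->]; rewrite lee_fin.
  have [/andP[a0 _] _] := aj_bounds F j t F0.
  by apply: addr_ge0 => //; apply: mulr_ge0 => //; exact: mdist_ge0.
have Ia : Ij F j s <= (aj F j s)%:E.
  apply: ereal_inf_lbound; exists s; by rewrite mdistxx mulr0 addr0.
have fin : Ij F j s \is a fin_num.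
  by rewrite ge0_fin_numE // (le_lt_trans Ia) // ltry.
split => //; rewrite /psij -!lee_fin fineK // I0 /=; exact: Ia.
Qed.

Lemma psij_lip {R : realType} {S : pmetricType R} (F : nat -> S -> \bar R) j s s' :
  (forall m x, 0 <= F m x) ->
  (psij F j s' <= psij F j s + j%:R * mdist s s')%R.
Proof.
move=> F0; have [fs _] := Ij_bounds F j s F0; have [fs' _] := Ij_bounds F j s' F0.
rewrite -lerBlDr -lee_fin /psij fineK //.
apply: le_ereal_inf_tmp => _ [t ->]; rewrite lee_fin lerBlDr.
rewrite -lee_fin fineK //.
apply: (@le_trans _ _ (aj F j t + j%:R * mdist s' t)%:E).
  by apply: ereal_inf_lbound; exists t.
rewrite lee_fin -addrA lerD2l -mulrDr ler_wpM2l // addrC metric_sym.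
by rewrite addrC [mdist s t]metric_sym; exact: metric_triangle.
Qed.

Lemma psij_lip2 {R : realType} {S : pmetricType R} (F : nat -> S -> \bar R) j s s' :
  (forall m x, 0 <= F m x) ->
  (`|psij F j s - psij F j s'| <= j%:R * mdist s s')%R.
Proof.
move=> F0; have h1 := psij_lip F j s s' F0; have h2 := psij_lip F j s' s F0.
rewrite metric_sym in h2; rewrite ler_norml; apply/andP; split; lra.
Qed.

Lemma psij_cont {R : realType} {S : pmetricType R} (F : nat -> S -> \bar R) j :
  (forall m x, 0 <= F m x) -> continuous (psij F j).
Proof.
move=> F0 x; apply/cvgrPdist_lt => e e0.
apply/nbhs_ballP; exists (e / j.+1%:R)%R; first by rewrite /= divr_gt0.
move=> t; rewrite ballEmdist /= => hd.
apply: (le_lt_trans (psij_lip2 F j x t F0)).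
have d0 : (0 <= mdist x t)%R by exact: mdist_ge0.
rewrite ltr_pdivlMr // in hd.
apply: (le_lt_trans _ hd); by rewrite [X in (_ <= X)%R]mulrC ler_wpM2r // ler_nat.
Qed.

Lemma open_sup_measurable' {R : realType} {S : pmetricType R} (g : S -> \bar R) :
  (forall a : R, open [set x : S | a%:E < g x]) -> measurable_fun (setT : set (borel S)) g.
Proof. exact: open_sup_measurable. Qed.

Lemma psij_meas {R : realType} {S : pmetricType R} (F : nat -> S -> \bar R) j :
  (forall m x, 0 <= F m x) ->
  measurable_fun (setT : set (borel S)) (fun x => (psij F j x)%:E).
Proof.
move=> F0; apply: open_sup_measurable' => a; apply: open_crit => x /=.
rewrite lte_fin => ax; exists ((psij F j x - a) / j.+1%:R)%R.
  by rewrite divr_gt0 // subr_gt0.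
move=> y hd; rewrite lte_fin.
have := psij_lip F j y x F0; rewrite metric_sym.
have d0 : (0 <= mdist x y)%R by exact: mdist_ge0.
rewrite ltr_pdivlMr // in hd.
have : (j%:R * mdist x y <= j.+1%:R * mdist x y)%R by rewrite ler_wpM2r // ler_nat.
rewrite mulrC in hd; lra.
Qed.

Lemma le_by_lt {R : realType} (x y : \bar R) :
  (forall c : R, c%:E < x -> c%:E <= y) -> x <= y.
Proof.
case: x => [r| |] H; case: y H => [q| |] H //=; rewrite ?leey ?leNye //.
- rewrite lee_fin leNgt; apply/negP => qr.
  have := H ((q + r) / 2)%R; rewrite !lte_fin !lee_fin => /(_ ltac:(lra)); lra.
- by have := H (r - 1)%R; rewrite lte_fin => /(_ ltac:(lra)).
- have := H (q + 1)%R; rewrite ltry lee_fin => /(_ isT) ?; exfalso; lra.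
- by have := H 0%R; rewrite ltry => /(_ isT).
Qed.

Lemma psij_le_F {R : realType} {S : pmetricType R} (F : nat -> S -> \bar R) j m s :
  (forall m x, 0 <= F m x) -> (j <= m)%N -> (psij F j s)%:E <= F m s.
Proof.
move=> F0 jm; have [_ /andP[_ pa]] := Ij_bounds F j s F0.
have [_ aE] := aj_bounds F j s F0.
apply: (@le_trans _ _ (aj F j s)%:E); first by rewrite lee_fin.
rewrite aE ge_min; apply/orP; left.
apply: ereal_inf_lbound; exists m => //; exists s => //.
by apply: ballxx; rewrite invr_gt0.
Qed.


Lemma psij_lower {R : realType} {S : pmetricType R} (F : nat -> S -> \bar R) N s (c : R) :
  (forall m x, 0 <= F m x) -> c%:E < Hn F N s ->
  exists J, forall j, (J <= j)%N -> (c <= psij F j s)%R.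
Proof.
move=> F0 cH.
case: (ltrP c 0) => c0.
  exists 0%N => j _; have [_ /andP[p0 _]] := Ij_bounds F j s F0; lra.
set q : R := (2 * N.+1%:R)%R.
have q1 : (1 <= q)%R.
  have : (1 <= N.+1%:R :> R)%R by rewrite ler1n.
  rewrite /q; lra.
pose J := maxn (N.*2.+1) (Num.Def.archi_bound (c * q)).
exists J => j Jj.
have j1 : (N.*2.+1 <= j)%N by apply: leq_trans Jj; exact: leq_maxl.
have j2 : (c * q < j%:R)%R.
  apply: (lt_le_trans (archi_boundP _)); first by apply: mulr_ge0 => //; lra.
  by rewrite ler_nat; apply: leq_trans Jj; exact: leq_maxr.
have qj : (q <= j.+1%:R)%R.
  have -> : q = (N.+1 * 2)%:R by rewrite /q natrM mulrC.
  by rewrite ler_nat mulSn add2n ltnS muln2.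
have cj : (c <= j%:R)%R.
  have : (c <= c * q)%R by rewrite ler_peMr.
  lra.
have [fin _] := Ij_bounds F j s F0.
rewrite -lee_fin /psij fineK //.
apply: le_ereal_inf_tmp => _ [t ->]; rewrite lee_fin.
have [/andP[a0 _] aE] := aj_bounds F j t F0.
have d0 : (0 <= mdist s t)%R by exact: mdist_ge0.
case: (ltrP (mdist s t * q) 1) => dst.
- have HH : Hn F N s <= Hn F j t.
    apply: ereal_inf_le_tmp => _ [m mj [u tu ->]]; exists m.
      by move: mj j1; lia.
    exists u => //; move: tu; rewrite !ballEmdist /=.
    rewrite -[(j.+1%:R^-1)%R]div1r ltr_pdivlMr // => tu.
    rewrite -[(N.+1%:R^-1)%R]div1r ltr_pdivlMr //.
    have tri := metric_triangle s t u.
    have d1 : (0 <= mdist t u)%R by exact: mdist_ge0.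
    have h1 : (mdist t u * q <= mdist t u * j.+1%:R)%R by rewrite ler_wpM2l.
    have h2 : (mdist s u * q <= (mdist s t + mdist t u) * q)%R.
      by rewrite ler_wpM2r // ; lra.
    have e : (mdist s u * q = 2 * (mdist s u * N.+1%:R))%R by rewrite /q mulrCA.
    rewrite mulrDl in h2; lra.
  have ca : (c <= aj F j t)%R.
    rewrite -lee_fin aE le_min; apply/andP; split.
      by apply: (le_trans (ltW cH)).
    by rewrite lee_fin.
  have : (0 <= j%:R * mdist s t)%R by apply: mulr_ge0.
  lra.
- have : (c * q * mdist s t <= j%:R * mdist s t)%R by rewrite ler_wpM2r // ltW.
  have : (c <= c * (mdist s t * q))%R by rewrite ler_peMr.
  have : (0 <= j%:R * mdist s t)%R by apply: mulr_ge0.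
  lra.
Qed.


Lemma Hn_le_liminf {R : realType} {S : pmetricType R} (F : nat -> S -> \bar R) N s :
  (forall m x, 0 <= F m x) -> Hn F N s <= limn_einf (fun j => (psij F j s)%:E).
Proof.
move=> F0; apply: le_by_lt => c cH.
have [J HJ] := psij_lower F N s c F0 cH.
apply: (@liminf_ge _ _ _ J) => k Jk; rewrite lee_fin; exact: HJ.
Qed.

Lemma L_le {R : realType} {S : pmetricType R} (f : nat -> borel S -> \bar R) (K : R) (s : S) :
  (0 <= K)%R ->
  liminf_joint f s <=
  limn_einf (fun j => (psij (fun m x => (maxe (f m x) (- K%:E) + K%:E)%E) j s)%:E) - K%:E.
Proof.
move=> K0; set Fk := (fun m x => (maxe (f m x) (- K%:E) + K%:E)%E).
have F0 : forall m x, 0 <= Fk m x.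
  move=> m x; rewrite /Fk -leeBlDr // sub0e.
  by rewrite le_max lexx orbT.
apply: ge_ereal_sup => _ [n [d d0 ->]].
rewrite leeBrDr //.
pose N := maxn n (Num.Def.archi_bound (d^-1)).
apply: (le_trans _ (Hn_le_liminf Fk N s F0)).
apply: le_ereal_inf_tmp => _ [m Nm [t ts ->]].
rewrite /Fk leeD2r //.
rewrite le_max; apply/orP; left.
apply: ereal_inf_lbound; exists m.
  by apply: leq_trans Nm; exact: leq_maxl.
exists t => //; apply: (le_ball _ ts).
have hN : (d^-1 < N.+1%:R)%R.
  apply: (lt_le_trans (archi_boundP _)); first by rewrite invr_ge0 ltW.
  by rewrite ler_nat; apply: leq_trans (leq_maxr n _) _.
rewrite -(invrK d) lef_pV2 ?posrE ?invr_gt0 //; exact: ltW.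
Qed.

Lemma L_meas {R : realType} {S : pmetricType R} (f : nat -> borel S -> \bar R) :
  measurable_fun (setT : set (borel S)) (liminf_joint f).
Proof.
apply: open_sup_measurable' => a; apply: open_crit => x /= /ereal_sup_gt [_ [n [d d0 ->]] ay].
exists (d / 2)%R; first by rewrite divr_gt0.
move=> y hy; apply: (lt_le_trans ay).
apply: (@le_trans _ _ (ereal_inf [set z | exists2 m : nat, (n <= m)%N &
           exists2 s' : S, ball y (d / 2)%R s' & z = f m s'])); last first.
  by apply: ereal_sup_ubound; exists n, (d / 2)%R => //; rewrite divr_gt0.
apply: ereal_inf_le_tmp => _ [m nm [s' ys' ->]]; exists m => //; exists s' => //.
move: ys'; rewrite !ballEmdist /= => ys'.
have := metric_triangle x y s'; lra.
Qed.


Lemma ui_extract {R : realType} (g : R -> \bar R) (del : R) :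
  (0 < del)%R -> g x @[x --> +oo%R] --> 0 -> exists K : R, (0 <= K)%R /\ g K < del%:E.
Proof.
move=> d0 /fine_cvgP [hfin hcv].
move/cvgrPdist_lt: hcv => /(_ del d0) hlt.
have [M [Mr HM]] := filterI hfin hlt.
exists (Num.max M 0 + 1)%R; split.
  by apply: addr_ge0 => //; rewrite le_max lexx orbT.
have [gf hl] := HM (Num.max M 0 + 1)%R ltac:(rewrite ltr_pwDr // le_max lexx //).
rewrite -(fineK gf) lte_fin; move: hl; rewrite sub0r normrN => hl.
exact: le_lt_trans (ler_norm _) hl.
Qed.

Lemma liminf_le {R : realType} (u : (\bar R)^nat) (c : \bar R) :
  (forall n, u n <= c) -> limn_einf u <= c.
Proof.
move=> H; rewrite limn_einf_lim (cvg_lim _ (@cvg_einfs_sup _ u)) //.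
apply: ge_ereal_sup => _ [n _ <-].
apply: (le_trans _ (H n)); apply: ereal_inf_lbound; by exists n => /=.
Qed.

Lemma approx_le {R : realType} (r : R) (J : \bar R) :
  (forall eps : R, (0 < eps)%R -> (r - eps)%:E <= J) -> r%:E <= J.
Proof.
move=> H; apply: le_by_lt => c; rewrite lte_fin => cr.
have := H (r - c)%R; rewrite subr_gt0 => /(_ cr).
by rewrite opprB addrC subrK.
Qed.


Lemma int1 (R : realType) (d : measure_display) (T : measurableType d) (nu : {measure set T -> \bar R}) :
  \int[nu]_x (1%R)%:E = nu setT.
Proof. by rewrite integral_cst // mul1e. Qed.

Lemma per_psi (R : realType) (S : pmetricType R)
  (mu_ : nat -> {measure set (borel S) -> \bar R})
  (mu : {measure set (borel S) -> \bar R})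
  (f : nat -> borel S -> \bar R) (K del B : R) (N0 j : nat) (psi : S -> R) :
  weak_cvg mu_ mu -> mu setT \is a fin_num ->
  (forall n, measurable_fun setT (f n)) ->
  (forall n, \int[mu_ n]_x (f n)^\+ x < +oo \/ \int[mu_ n]_x (f n)^\- x < +oo) ->
  (0 <= K)%R ->
  (forall m, (N0 <= m)%N ->
     \int[mu_ m]_(x in [set x | K%:E <= `|(f m)^\- x|]) `|(f m)^\- x| < del%:E) ->
  continuous psi -> (forall x, 0 <= psi x <= B)%R ->
  measurable_fun (setT : set (borel S)) (fun x => (psi x)%:E) ->
  (forall m x, (j <= m)%N -> (psi x)%:E <= maxe (f m x) (- K%:E) + K%:E) ->
  \int[mu]_x (psi x)%:E <=
    limn_einf (fun n => \int[mu_ n]_x f n x) + (K * fine (mu setT) + del)%:E.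
Proof.
move=> hw muf hf hdef K0 he cpsi bpsi mpsi hpsi.
set J := limn_einf _.
have bnd : exists M : R, forall x, (`|psi x| <= M)%R.
  by exists B => x; have /andP[h1 h2] := bpsi x; rewrite ger0_norm.
have cv1 := hw psi cpsi bnd.
have bnd1 : exists M : R, forall x : S, (`|(fun=> 1%R) x| <= M)%R.
  by exists 1%R => x; rewrite normr1.
have cv0 := hw (fun=> 1%R) (@cst_continuous _ _ _) bnd1.
have e1 : (fun n => \int[mu_ n]_x (1%R)%:E) = (fun n => mu_ n setT).
  by apply: funext => n; rewrite int1.
rewrite e1 int1 in cv0.
have psi0 : forall x, (0 <= psi x)%R by move=> x; have /andP[] := bpsi x.
have psif : \int[mu]_x (psi x)%:E \is a fin_num.
  rewrite ge0_fin_numE; last by apply: integral_ge0 => x _; rewrite lee_fin.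
  apply: (@le_lt_trans _ _ (\int[mu]_x (cst B%:E) x)).
    apply: ge0_le_integral => //.
    - by move=> x _; rewrite lee_fin.
    - by move=> x _; have /andP[_ ?] := bpsi x; rewrite lee_fin.
  by rewrite integral_cst // -(fineK muf) -EFinM ltry.
set P := fine (\int[mu]_x (psi x)%:E).
set muS := fine (mu setT).
rewrite -(fineK psif) in cv1; rewrite -(fineK muf) in cv0.
move/fine_cvgP: cv1 => [fin1 c1]; move/fine_cvgP: cv0 => [fin0 c0].
have bseq : (fun n => fine (\int[mu_ n]_x (psi x)%:E) - fine (mu_ n setT) * K)%R @ \oo
    --> (P - muS * K)%R.
  by apply: cvgB => //; apply: cvgMl.
suff H : (P - K * muS - del)%:E <= J.
  rewrite -(fineK psif) -/P; move: H; case: J => [r| |] //=; rewrite ?lee_fin ?leey //.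
  move=> *; lra.
apply: approx_le => eps eps0.
have hb0 := proj1 (cvgrPdist_lt _ _) bseq _ eps0.
have hb := hb0 eventually_filter; clear hb0.
have [N1 _ HN1] := filterI (filterI fin1 fin0) hb.
apply: (@liminf_ge _ _ _ (maxn N0 (maxn N1 j))) => m hm.
have hN1 : (N1 <= m)%N by apply: leq_trans hm; rewrite leq_max leq_maxl orbT.
have hN0 : (N0 <= m)%N by apply: leq_trans hm; rewrite leq_maxl.
have hj : (j <= m)%N by apply: leq_trans hm; rewrite !leq_max leqnn !orbT.
have [[f1 f0] hlt] := HN1 m hN1.
have hem := he m hN0.
have efin : \int[mu_ m]_(x in [set x | K%:E <= `|(f m)^\- x|]) `|(f m)^\- x| \is a fin_num.
  rewrite ge0_fin_numE; first exact: (lt_trans hem (ltry _)).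
  by apply: integral_ge0 => x _; exact: abse_ge0.
have k := @key_one _ _ _ (mu_ m) (f m) psi K K0 f0 (hf m) mpsi psi0 (fun x => hpsi m x hj) f1 efin (hdef m).
apply: le_trans k.
move: hem hlt; rewrite -(fineK f1) -(fineK f0) -(fineK efin) /= => hem hlt.
rewrite -!EFinD lee_fin; rewrite lte_fin in hem.
have := ler_norm ((P - muS * K) - (fine (\int[mu_ m]_x (psi x)%:E) - fine (mu_ m setT) * K))%R.
move=> hn; lra.
Qed.


Lemma arith3 {R : realType} (A J : \bar R) (c d : R) :
  0 <= A -> A <= J + (c + d)%:E -> A - c%:E <= J + d%:E.
Proof.
case: A => [a| |]; case: J => [r| |] //=; rewrite ?lee_fin ?leey ?leNye //=.
move=> *; lra.
Qed.

Theorem theorem2p4 (R : realType) (S : pmetricType R)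
  (mu_ : nat -> {measure set (borel S) -> \bar R})
  (mu : {measure set (borel S) -> \bar R})
  (f : nat -> borel S -> \bar R) :
  weak_cvg mu_ mu ->
  mu setT < +oo ->
  (forall n, measurable_fun setT (f n)) ->
  asymp_unif_integrable mu_ (fun n => (f n)^\-) ->
  (* all integrals appearing are assumed to be defined *)
  (forall n, \int[mu_ n]_x (f n)^\+ x < +oo \/ \int[mu_ n]_x (f n)^\- x < +oo) ->
  (\int[mu]_x (liminf_joint f)^\+ x < +oo \/
   \int[mu]_x (liminf_joint f)^\- x < +oo) ->
  \int[mu]_x liminf_joint f x <= limn_einf (fun n => \int[mu_ n]_x f n x).
Proof.
move=> hw hmu hf hui hdef hdefL.
set J := limn_einf _.
have muf : mu setT \is a fin_num by rewrite ge0_fin_numE.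
apply/lee_addgt0Pr => del del0.
have [K [K0 hK]] := ui_extract _ _ del0 hui.
have [N0 hN0] := limsup_lt _ _ _ hK.
set Fk := (fun m x => (maxe (f m x) (- K%:E) + K%:E)%E).
have F0 : forall m x, 0 <= Fk m x.
  move=> m x; rewrite /Fk -leeBlDr // sub0e.
  by rewrite le_max lexx orbT.
set Lam := fun x => limn_einf (fun j => (psij Fk j x)%:E).
have hj : forall j, \int[mu]_x (psij Fk j x)%:E <= J + (K * fine (mu setT) + del)%:E.
  move=> j; apply: (@per_psi _ _ _ _ _ _ _ j%:R N0 j) => //.
  - exact: psij_cont.
  - move=> x; have [_ /andP[h1 h2]] := Ij_bounds Fk j x F0.
    have [/andP[_ h3] _] := aj_bounds Fk j x F0.
    by rewrite h1 /= (le_trans h2).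
  - exact: psij_meas.
  - by move=> m x jm; apply: psij_le_F.
have mpsi : forall j, measurable_fun (setT : set (borel S)) (fun x : S => (psij Fk j x)%:E) by move=> j; exact: psij_meas.
have p0 : forall j (x : borel S), setT x -> 0 <= (psij Fk j x)%:E.
  by move=> j x _; have [_ /andP[h1 _]] := Ij_bounds Fk j x F0; rewrite lee_fin.
have fat := @fatou _ _ _ mu setT measurableT (fun j x => (psij Fk j x)%:E) mpsi p0.
have hLam : \int[mu]_x Lam x <= J + (K * fine (mu setT) + del)%:E.
  exact: (le_trans fat (liminf_le _ _ hj)).
have Lam0 : forall x, 0 <= Lam x.
  move=> x; apply: (@liminf_ge _ _ _ 0%N) => k _.
  by have [_ /andP[h1 _]] := Ij_bounds Fk k x F0; rewrite lee_fin.
have mLam : measurable_fun (setT : set (borel S)) Lam.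
  have -> : Lam = (fun x => - limn_esup (fun j => - (psij Fk j x)%:E)).
    by apply: funext => x; rewrite /Lam /limn_einf.
  apply: (@measurableT_comp _ _ _ _ _ _ -%E); first exact: oppe_measurable.
  apply: measurable_fun_limn_esup => n.
  apply: (@measurableT_comp _ _ _ _ _ _ -%E); first exact: oppe_measurable.
  exact: mpsi.
have hL := int_bound _ _ _ mu _ _ K K0 muf (L_meas f) mLam Lam0 (fun x => L_le f K x K0) hdefL.
eapply le_trans; [exact: hL|].
rewrite -(fineK muf) -EFinM; apply: arith3 => //.
by apply: integral_ge0 => x _; exact: Lam0.
Qed.
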